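(* Let $f>0$ be an even $C^2$ function on $\mathbb{R}$ with $f'(v)\geq0$ for $v\geq0$ and $f'(v)^2\leq C_0 f''(v)f(v)$ for all $v$. Let $t\geq0$, $R>0$, and let $\phi$ be smooth on a neighbourhood of $\{t\}\times\{|x|\leq R\}$. Then, with a constant depending only on $C_0$, \[ \int_{|x|\leq R}f''(t-r)\phi^2\,dx\lesssim\int_{|x|\leq R}\Big[f(t+r)\big(L(r\phi)\big)^2+f(t-r)\big(\underline L(r\phi)\big)^2\Big]\frac{dx}{r^2}+|f'(t-R)|\int_{|x|=R}\phi^2\,R^2\,dS(\omega). \]
   Context: $r=|x|$, $\omega=x/r$, $\partial_r=\omega^i\partial_i$, $L=\partial_t+\partial_r$, $\underline L=\partial_t-\partial_r$; $dS(\omega)$ is the standard measure on the unit sphere. *)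

(* Defs.v *)
From Stdlib Require Import Reals Lra List ClassicalEpsilon.
Open Scope R_scope.

(* Functions of (t, x1, x2, x3). *)
Definition fun4 := R -> R -> R -> R -> R.

Definition coord (i : nat) (t x y z : R) : R :=
  match i with 0%nat => t | 1%nat => x | 2%nat => y | _ => z end.

Definition along (g : fun4) (i : nat) (t x y z : R) : R -> R :=
  match i with
  | 0%nat => fun s => g s x y z
  | 1%nat => fun s => g t s y z
  | 2%nat => fun s => g t x s z
  | _ => fun s => g t x y s
  end.

Definition open4 (U : R -> R -> R -> R -> Prop) : Prop :=
  forall t x y z, U t x y z -> exists d, 0 < d /\
    forall t' x' y' z', Rabs (t' - t) < d -> Rabs (x' - x) < d ->
      Rabs (y' - y) < d -> Rabs (z' - z) < d -> U t' x' y' z'.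

Definition cont4_on (U : R -> R -> R -> R -> Prop) (g : fun4) : Prop :=
  forall t x y z, U t x y z -> forall eps, 0 < eps -> exists d, 0 < d /\
    forall t' x' y' z', Rabs (t' - t) < d -> Rabs (x' - x) < d ->
      Rabs (y' - y) < d -> Rabs (z' - z) < d ->
      Rabs (g t' x' y' z' - g t x y z) < eps.

(* C^infinity on the open set U: all iterated partial derivatives
   D (i_k :: ... :: i_1 :: nil) = d_{i_k} ... d_{i_1} g exist and are
   continuous on U. *)
Definition smooth_on (U : R -> R -> R -> R -> Prop) (g : fun4) : Prop :=
  exists D : list nat -> fun4,
    (forall t x y z, U t x y z -> D nil t x y z = g t x y z) /\
    (forall l i t x y z, (i < 4)%nat -> U t x y z ->
       derivable_pt_lim (along (D l) i t x y z) (coord i t x y z)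
                        (D (i :: l) t x y z)) /\
    (forall l, cont4_on U (D l)).

(* Riemann integral on [a,b] (its value when h is Riemann integrable). *)
Definition Rint (h : R -> R) (a b : R) : R :=
  epsilon (inhabits 0)
    (fun v => exists pr : Riemann_integrable h a b, RiemannInt pr = v).

(* Integral over the unit sphere S^2 w.r.t. the standard measure dS(omega),
   in spherical coordinates omega = (sin th cos ph, sin th sin ph, cos th),
   dS = sin th dth dph. *)
Definition sph_int (F : R -> R -> R -> R) : R :=
  Rint (fun ph =>
    Rint (fun th => F (sin th * cos ph) (sin th * sin ph) (cos th) * sin th)
         0 PI) 0 (2 * PI).

(* Integral over the ball {|x| <= Rr} in R^3, in polar coordinates
   x = r omega, dx = r^2 dr dS(omega); G r w1 w2 w3 is the integrand
   evaluated at x = r omega. *)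
Definition ball_int (Rr : R) (G : R -> R -> R -> R -> R) : R :=
  sph_int (fun w1 w2 w3 => Rint (fun r => G r w1 w2 w3 * r ^ 2) 0 Rr).

(* At the point (t, r omega):  L(r phi) = (d_t + d_r)(r phi)
   = phi + r (d_t phi + omega^i d_i phi), since d_r r = 1;
   Lbar(r phi) = (d_t - d_r)(r phi) = - phi + r (d_t phi - omega^i d_i phi).
   dphi i is the i-th partial derivative of phi (0 = time). *)
Definition Lrphi (phi : fun4) (dphi : nat -> fun4) (t r w1 w2 w3 : R) : R :=
  let x := r * w1 in let y := r * w2 in let z := r * w3 in
  phi t x y z + r * (dphi 0%nat t x y z +
    (w1 * dphi 1%nat t x y z + w2 * dphi 2%nat t x y z + w3 * dphi 3%nat t x y z)).

Definition Lbrphi (phi : fun4) (dphi : nat -> fun4) (t r w1 w2 w3 : R) : R :=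
  let x := r * w1 in let y := r * w2 in let z := r * w3 in
  - phi t x y z + r * (dphi 0%nat t x y z -
    (w1 * dphi 1%nat t x y z + w2 * dphi 2%nat t x y z + w3 * dphi 3%nat t x y z)).

(* Main.v *)
Require Import Defs.
From Stdlib Require Import Reals ClassicalEpsilon.
From Coquelicot Require Import Coquelicot.
From Stdlib Require Import Reals Lra Lia List Classical ClassicalEpsilon.
Open Scope R_scope.


Lemma cont_of_eps (f: R->R) x: (forall eps, 0<eps -> exists d, 0<d /\ forall x', Rabs (x'-x) < d -> Rabs (f x' - f x) < eps) -> continuous f x.
Proof.
intros H. apply filterlim_locally. intros eps. destruct (H eps (cond_pos eps)) as [d [Hd Hd']].
exists (mkposreal d Hd). intros y Hy. apply Hd'. exact Hy.
Qed.
Lemma eps_of_cont (f: R->R) x: continuous f x -> (forall eps, 0<eps -> exists d, 0<d /\ forall x', Rabs (x'-x) < d -> Rabs (f x' - f x) < eps).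
Proof.
intros H eps Heps. apply filterlim_locally with (eps := mkposreal eps Heps) in H.
destruct H as [d Hd]. exists d. split. apply cond_pos. intros x' H1. apply (Hd x'). exact H1.
Qed.
Lemma eps_of_cont3 (h : R -> R -> R -> R) x p q :
  continuous (fun z : R*R*R => h (fst (fst z)) (snd (fst z)) (snd z)) ((x,p),q) ->
  forall eps, 0 < eps -> exists d, 0 < d /\ forall x' p' q', Rabs (x'-x) < d -> Rabs (p'-p) < d -> Rabs (q'-q) < d -> Rabs (h x' p' q' - h x p q) < eps.
Proof.
intros H eps Heps. apply filterlim_locally with (eps := mkposreal eps Heps) in H.
destruct H as [d Hd]. exists d. split. apply cond_pos. intros x' p' q' H1 H2 H3.
apply (Hd ((x',p'),q')). split. split. exact H1. exact H2. exact H3.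
Qed.
Lemma cont_of_eps2 (g : R -> R -> R) p q :
  (forall eps, 0 < eps -> exists d, 0 < d /\ forall p' q', Rabs (p'-p) < d -> Rabs (q'-q) < d -> Rabs (g p' q' - g p q) < eps) ->
  continuous (fun z : R*R => g (fst z) (snd z)) (p,q).
Proof.
intros H. apply filterlim_locally. intros eps. destruct (H eps (cond_pos eps)) as [d [Hd Hd']].
exists (mkposreal d Hd). intros [y1 y2] [Hy1 Hy2]. apply Hd'. exact Hy1. exact Hy2.
Qed.
Lemma cont_sin x : continuous sin x.
Proof. apply continuity_pt_filterlim. apply continuity_sin. Qed.
Lemma cont_cos x : continuous cos x.
Proof. apply continuity_pt_filterlim. apply continuity_cos. Qed.

Definition jc3 (h : R -> R -> R -> R) x p q := forall eps, 0 < eps -> exists d, 0 < d /\ forall x' p' q', Rabs (x'-x) < d -> Rabs (p'-p) < d -> Rabs (q'-q) < d -> Rabs (h x' p' q' - h x p q) < eps.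

Lemma unif3 (h : R -> R -> R -> R) a b p q :
  a <= b -> (forall x, a <= x <= b -> jc3 h x p q) ->
  forall eps, 0 < eps -> exists d, 0 < d /\ forall x p' q', a <= x <= b -> Rabs (p'-p) < d -> Rabs (q'-q) < d -> Rabs (h x p' q' - h x p q) < eps.
Proof.
intros Hab Hc eps Heps.
set (E := fun y => a <= y <= b /\ exists d, 0<d /\ forall x p' q', a <= x <= y -> Rabs (p'-p)<d -> Rabs (q'-q)<d -> Rabs (h x p' q' - h x p q) < eps).
assert (Ea : E a).
{ split. lra. destruct (Hc a (conj (Rle_refl a) Hab) eps Heps) as [d [Hd Hd']].
  exists d. split. exact Hd. intros x p' q' Hx H1 H2. replace x with a by lra.
  apply Hd'; auto. rewrite Rminus_diag, Rabs_R0; exact Hd. }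
destruct (completeness E) as [s [Hub Hlub]].
{ exists b. intros y [Hy _]. lra. }
{ exists a. exact Ea. }
assert (Has : a <= s) by (apply Hub; exact Ea).
assert (Hsb : s <= b) by (apply Hlub; intros y [Hy _]; lra).
destruct (Hc s (conj Has Hsb) (eps/2) ltac:(lra)) as [d0 [Hd0 Hd0']].
assert (Hy : exists y, E y /\ s - d0 < y).
{ destruct (classic (exists y, E y /\ s - d0 < y)) as [H|H]. exact H.
  exfalso. assert (s <= s - d0). apply Hlub. intros y Ey.
  destruct (Rle_or_lt y (s - d0)) as [H'|H']. exact H'. exfalso; apply H; exists y; auto.
  lra. }
destruct Hy as [y [[Hy1 [d1 [Hd1 Hd1']]] Hy2]].
set (y' := Rmin b (s + d0/2)).
assert (Ey' : E y').
{ split. unfold y'; split. apply Rmin_glb; lra. apply Rmin_l.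
  exists (Rmin d0 d1). split. apply Rmin_glb_lt; auto.
  intros x p' q' Hx H1 H2.
  destruct (Rle_or_lt x y) as [Hxy|Hxy].
  - apply Hd1'. lra. eapply Rlt_le_trans. exact H1. apply Rmin_r.
    eapply Rlt_le_trans. exact H2. apply Rmin_r.
  - assert (Hxs : Rabs (x - s) < d0).
    { assert (x <= s + d0/2). { eapply Rle_trans. apply Hx. apply Rmin_r. }
      apply Rabs_def1; lra. }
    assert (A1 : Rabs (h x p' q' - h s p q) < eps/2).
    { apply Hd0'. exact Hxs. eapply Rlt_le_trans. exact H1. apply Rmin_l.
      eapply Rlt_le_trans. exact H2. apply Rmin_l. }
    assert (A2 : Rabs (h x p q - h s p q) < eps/2).
    { apply Hd0'. exact Hxs. rewrite Rminus_diag, Rabs_R0; exact Hd0. rewrite Rminus_diag, Rabs_R0; exact Hd0. }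
    replace (h x p' q' - h x p q) with ((h x p' q' - h s p q) - (h x p q - h s p q)) by ring.
    eapply Rle_lt_trans. apply Rabs_triang. rewrite Rabs_Ropp. lra. }
assert (Hy's : y' <= s) by (apply Hub; exact Ey').
assert (Hsb' : s = b).
{ destruct (Rle_lt_or_eq_dec s b Hsb) as [H|H]; auto. exfalso.
  unfold y' in Hy's. unfold Rmin in Hy's. destruct (Rle_dec b (s + d0/2)); lra. }
assert (y' = b). { unfold y', Rmin. destruct (Rle_dec b (s + d0/2)); lra. }
destruct Ey' as [_ [d [Hd Hd']]]. exists d. split. exact Hd.
intros x p' q' Hx H1 H2. apply Hd'. lra. exact H1. exact H2.
Qed.

Definition jc2 (g : R -> R -> R) p q := forall eps, 0 < eps -> exists d, 0 < d /\ forall p' q', Rabs (p'-p) < d -> Rabs (q'-q) < d -> Rabs (g p' q' - g p q) < eps.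

Lemma jc3_ex_RInt (h : R -> R -> R -> R) a b p q : a <= b -> (forall x, a <= x <= b -> jc3 h x p q) ->
  ex_RInt (fun x => h x p q) a b.
Proof.
intros Hab Hc. apply (ex_RInt_continuous (V:=R_CompleteNormedModule)). intros z Hz.
rewrite Rmin_left in Hz by lra. rewrite Rmax_right in Hz by lra.
apply cont_of_eps. intros eps Heps. destruct (Hc z Hz eps Heps) as [d [Hd Hd']].
exists d. split. exact Hd. intros x' Hx'. apply Hd'. exact Hx'.
rewrite Rminus_diag, Rabs_R0; exact Hd. rewrite Rminus_diag, Rabs_R0; exact Hd.
Qed.

Lemma param_int (h : R -> R -> R -> R) a b : a <= b ->
  (forall x p q, a <= x <= b -> jc3 h x p q) ->
  forall p q, jc2 (fun p q => RInt (fun x => h x p q) a b) p q.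
Proof.
intros Hab Hc p q eps Heps.
destruct (unif3 h a b p q Hab (fun x Hx => Hc x p q Hx) (eps / (b - a + 1))) as [d [Hd Hd']].
{ apply Rdiv_lt_0_compat; lra. }
exists d. split. exact Hd. intros p' q' H1 H2.
assert (E1 := jc3_ex_RInt h a b p' q' Hab (fun x Hx => Hc x p' q' Hx)).
assert (E2 := jc3_ex_RInt h a b p q Hab (fun x Hx => Hc x p q Hx)).
assert (Eq := RInt_minus _ _ a b E1 E2).
change (minus (RInt (fun x : R => h x p' q') a b) (RInt (fun x : R => h x p q) a b))
  with (RInt (fun x : R => h x p' q') a b - RInt (fun x : R => h x p q) a b) in Eq.
rewrite <- Eq.
eapply Rle_lt_trans. apply abs_RInt_le_const with (M := eps / (b - a + 1)). exact Hab.
apply ex_RInt_minus; assumption.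
intros x Hx. left. apply Hd'; assumption.
apply Rlt_le_trans with ((b - a + 1) * (eps / (b - a + 1))).
apply Rmult_lt_compat_r. apply Rdiv_lt_0_compat; lra. lra.
right. field. lra.
Qed.


Lemma Rint_RInt h a b : ex_RInt h a b -> Rint h a b = RInt h a b.
Proof.
intros H. unfold Rint.
assert (P : exists v, exists pr : Riemann_integrable h a b, RiemannInt pr = v).
{ exists (RiemannInt (ex_RInt_Reals_0 _ _ _ H)). exists (ex_RInt_Reals_0 _ _ _ H). reflexivity. }
destruct (epsilon_spec (inhabits 0) _ P) as [pr Hpr].
rewrite <- Hpr. symmetry. apply RInt_Reals.
Qed.

Ltac sabs := unfold Rabs in *; repeat match goal with
  | |- context [Rcase_abs ?x] => destruct (Rcase_abs x)
  | H : context [Rcase_abs ?x] |- _ => destruct (Rcase_abs x) end.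

Lemma between_abs a b c : Rmin a b <= c <= Rmax a b -> Rabs (c - a) <= Rabs (b - a).
Proof. unfold Rmin, Rmax; destruct (Rle_dec a b) as [h|h]; [|apply Rnot_le_lt in h]; intros; sabs; lra. Qed.

Lemma mvt_gen f f' a b : (forall c, Rmin a b <= c <= Rmax a b -> derivable_pt_lim f c (f' c)) ->
  exists c, Rmin a b <= c <= Rmax a b /\ f b - f a = f' c * (b - a).
Proof.
intros H. destruct (Rtotal_order a b) as [Hab|[Hab|Hab]].
- destruct (MVT_cor2 f f' a b Hab) as [c [Hc1 Hc2]].
  { intros c Hc. apply H. rewrite Rmin_left, Rmax_right; lra. }
  exists c. split. rewrite Rmin_left, Rmax_right; lra. exact Hc1.
- subst. exists b. split. rewrite Rmin_left, Rmax_right; lra. ring.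
- destruct (MVT_cor2 f f' b a Hab) as [c [Hc1 Hc2]].
  { intros c Hc. apply H. rewrite Rmin_right, Rmax_left; lra. }
  exists c. split. rewrite Rmin_right, Rmax_left; lra. lra.
Qed.

Definition cont4_at (g : fun4) t x y z := forall eps, 0 < eps -> exists d, 0 < d /\
    forall t' x' y' z', Rabs (t' - t) < d -> Rabs (x' - x) < d ->
      Rabs (y' - y) < d -> Rabs (z' - z) < d ->
      Rabs (g t' x' y' z' - g t x y z) < eps.

Lemma deriv_agree f g x l d : 0 < d -> (forall y, Rabs (y - x) < d -> f y = g y) ->
  derivable_pt_lim f x l -> derivable_pt_lim g x l.
Proof.
intros Hd Hfg Hf eps Heps. destruct (Hf eps Heps) as [del Hdel].
assert (Hm : 0 < Rmin del d) by (apply Rmin_glb_lt; [apply cond_pos|exact Hd]).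
exists (mkposreal _ Hm). intros h Hh0 Hh. simpl in Hh.
rewrite <- !Hfg. apply Hdel. exact Hh0. eapply Rlt_le_trans. exact Hh. apply Rmin_l.
rewrite Rminus_diag, Rabs_R0; exact Hd.
replace (x + h - x) with h by ring. eapply Rlt_le_trans. exact Hh. apply Rmin_r.
Qed.

Section PhiFacts.
Variables (U : R -> R -> R -> R -> Prop) (phi : fun4) (dphi : nat -> fun4).
Hypothesis HU : open4 U.
Hypothesis Hsm : smooth_on U phi.
Hypothesis Hd : forall i s x y z, (i < 4)%nat -> U s x y z ->
       derivable_pt_lim (along phi i s x y z) (coord i s x y z) (dphi i s x y z).

Lemma phi_cont t x y z : U t x y z -> cont4_at phi t x y z.
Proof.
intros Hu eps Heps. destruct Hsm as [D [HD0 [_ HDc]]].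
destruct (HU t x y z Hu) as [d0 [Hd0 Hd0']].
destruct (HDc nil t x y z Hu eps Heps) as [d1 [Hd1 Hd1']].
exists (Rmin d0 d1). split. apply Rmin_glb_lt; auto.
intros t' x' y' z' H1 H2 H3 H4.
assert (L0 : forall a, a < Rmin d0 d1 -> a < d0) by (intros a Ha; eapply Rlt_le_trans; [exact Ha|apply Rmin_l]).
assert (L1 : forall a, a < Rmin d0 d1 -> a < d1) by (intros a Ha; eapply Rlt_le_trans; [exact Ha|apply Rmin_r]).
rewrite <- (HD0 t' x' y' z'), <- (HD0 t x y z) by (auto).
apply Hd1'; auto.
Qed.

Lemma dphi_eq i t x y z : (i < 4)%nat -> U t x y z -> exists D : list nat -> fun4, dphi i t x y z = D (i :: nil) t x y z /\ cont4_on U (D (i::nil)) /\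
   forall t' x' y' z', U t' x' y' z' -> dphi i t' x' y' z' = D (i :: nil) t' x' y' z'.
Proof.
intros Hi Hu. destruct Hsm as [D [HD0 [HDd HDc]]]. exists D.
assert (G : forall t' x' y' z', U t' x' y' z' -> dphi i t' x' y' z' = D (i :: nil) t' x' y' z').
{ intros t' x' y' z' Hu'.
  apply (uniqueness_limite (along phi i t' x' y' z') (coord i t' x' y' z')).
  apply Hd; auto.
  destruct (HU t' x' y' z' Hu') as [d0 [Hd0 Hd0']].
  apply (deriv_agree (along (D nil) i t' x' y' z') _ _ _ d0 Hd0).
  2: apply HDd; auto.
  intros s Hs.
  destruct i as [|[|[|[|i]]]]; simpl in *; try lia;
  rewrite HD0; auto; apply Hd0'; try rewrite Rminus_diag, Rabs_R0; auto. }
split. apply G; auto. split. apply HDc. exact G.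
Qed.

Lemma dphi_cont i t x y z : (i < 4)%nat -> U t x y z -> cont4_at (dphi i) t x y z.
Proof.
intros Hi Hu eps Heps. destruct (dphi_eq i t x y z Hi Hu) as [D [E1 [Hc G]]].
destruct (HU t x y z Hu) as [d0 [Hd0 Hd0']].
destruct (Hc t x y z Hu eps Heps) as [d1 [Hd1 Hd1']].
exists (Rmin d0 d1). split. apply Rmin_glb_lt; auto.
intros t' x' y' z' H1 H2 H3 H4.
assert (L0 : forall a, a < Rmin d0 d1 -> a < d0) by (intros a Ha; eapply Rlt_le_trans; [exact Ha|apply Rmin_l]).
assert (L1 : forall a, a < Rmin d0 d1 -> a < d1) by (intros a Ha; eapply Rlt_le_trans; [exact Ha|apply Rmin_r]).
rewrite E1, G by auto.
apply Hd1'; auto.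
Qed.

Lemma abs_hw h w : Rabs w <= 1 -> Rabs (h * w) <= Rabs h.
Proof. intros Hw. rewrite Rabs_mult. rewrite <- (Rmult_1_r (Rabs h)) at 2. apply Rmult_le_compat_l. apply Rabs_pos. exact Hw. Qed.

Lemma chain_dir t r w1 w2 w3 : U t (r*w1) (r*w2) (r*w3) -> Rabs w1 <= 1 -> Rabs w2 <= 1 -> Rabs w3 <= 1 ->
 derivable_pt_lim (fun s => phi t (s*w1) (s*w2) (s*w3)) r
   (w1 * dphi 1 t (r*w1) (r*w2) (r*w3) + w2 * dphi 2 t (r*w1) (r*w2) (r*w3) + w3 * dphi 3 t (r*w1) (r*w2) (r*w3)).
Proof.
intros Hu Hw1 Hw2 Hw3.
set (x := r*w1). set (y := r*w2). set (z := r*w3). fold x y z in Hu.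
intros eps Heps.
destruct (HU t x y z Hu) as [d0 [Hd0 Hd0']].
destruct (dphi_cont 1 t x y z ltac:(lia) Hu (eps/3) ltac:(lra)) as [d1 [Hd1 Hd1']].
destruct (dphi_cont 2 t x y z ltac:(lia) Hu (eps/3) ltac:(lra)) as [d2 [Hd2 Hd2']].
destruct (dphi_cont 3 t x y z ltac:(lia) Hu (eps/3) ltac:(lra)) as [d3 [Hd3 Hd3']].
set (del := Rmin d0 (Rmin d1 (Rmin d2 d3))).
assert (Hdel : 0 < del) by (unfold del; repeat apply Rmin_glb_lt; auto).
assert (L0 : del <= d0) by (unfold del; apply Rmin_l).
assert (L1 : del <= d1) by (unfold del; eapply Rle_trans; [apply Rmin_r|apply Rmin_l]).
assert (L2 : del <= d2) by (unfold del; eapply Rle_trans; [apply Rmin_r|eapply Rle_trans; [apply Rmin_r|apply Rmin_l]]).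
assert (L3 : del <= d3) by (unfold del; eapply Rle_trans; [apply Rmin_r|eapply Rle_trans; [apply Rmin_r|apply Rmin_r]]).
exists (mkposreal del Hdel). intros h Hh0 Hh. simpl in Hh.
replace ((r + h) * w1) with (x + h*w1) by (unfold x; ring).
replace ((r + h) * w2) with (y + h*w2) by (unfold y; ring).
replace ((r + h) * w3) with (z + h*w3) by (unfold z; ring).
set (X := x + h*w1). set (Y := y + h*w2). set (Z := z + h*w3).
assert (B1 : Rabs (h*w1) < del) by (eapply Rle_lt_trans; [apply abs_hw; auto|exact Hh]).
assert (B2 : Rabs (h*w2) < del) by (eapply Rle_lt_trans; [apply abs_hw; auto|exact Hh]).
assert (B3 : Rabs (h*w3) < del) by (eapply Rle_lt_trans; [apply abs_hw; auto|exact Hh]).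
assert (Z0 : forall a, Rabs (a - a) < del) by (intros a; rewrite Rminus_diag, Rabs_R0; exact Hdel).
assert (EX : Rabs (X - x) < del) by (unfold X; replace (x + h*w1 - x) with (h*w1) by ring; exact B1).
assert (EY : Rabs (Y - y) < del) by (unfold Y; replace (y + h*w2 - y) with (h*w2) by ring; exact B2).
assert (EZ : Rabs (Z - z) < del) by (unfold Z; replace (z + h*w3 - z) with (h*w3) by ring; exact B3).
assert (Lt : forall a b, a < b -> b <= d0 -> a < d0) by (intros; lra).
destruct (mvt_gen (fun s => phi t x y s) (fun s => dphi 3 t x y s) z Z) as [c3 [Hc3 E3]].
{ intros c Hc. apply (Hd 3 t x y c ltac:(lia)). apply Hd0'; try (eapply Lt; [apply Z0|exact L0]).
  eapply Rle_lt_trans. apply between_abs; exact Hc. eapply Lt; [exact EZ|exact L0]. }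
destruct (mvt_gen (fun s => phi t x s Z) (fun s => dphi 2 t x s Z) y Y) as [c2 [Hc2 E2]].
{ intros c Hc. apply (Hd 2 t x c Z ltac:(lia)). apply Hd0'; try (eapply Lt; [apply Z0|exact L0]).
  eapply Rle_lt_trans. apply between_abs; exact Hc. eapply Lt; [exact EY|exact L0]. eapply Lt; [exact EZ|exact L0]. }
destruct (mvt_gen (fun s => phi t s Y Z) (fun s => dphi 1 t s Y Z) x X) as [c1 [Hc1 E1]].
{ intros c Hc. apply (Hd 1 t c Y Z ltac:(lia)). apply Hd0'; try (eapply Lt; [apply Z0|exact L0]).
  eapply Rle_lt_trans. apply between_abs; exact Hc. eapply Lt; [exact EX|exact L0]. eapply Lt; [exact EY|exact L0]. eapply Lt; [exact EZ|exact L0]. }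
simpl in E1, E2, E3.
assert (Q : (phi t X Y Z - phi t x y z) / h = w1 * dphi 1 t c1 Y Z + w2 * dphi 2 t x c2 Z + w3 * dphi 3 t x y c3).
{ replace (phi t X Y Z - phi t x y z) with ((phi t X Y Z - phi t x Y Z) + (phi t x Y Z - phi t x y Z) + (phi t x y Z - phi t x y z)) by ring.
  rewrite E1, E2, E3. unfold X, Y, Z. field. exact Hh0. }
fold x y z. rewrite Q.
assert (A1 : Rabs (dphi 1 t c1 Y Z - dphi 1 t x y z) < eps/3).
{ apply Hd1'; try (eapply Rlt_le_trans; [|exact L1]). apply Z0.
  eapply Rle_lt_trans. apply between_abs; exact Hc1. exact EX. exact EY. exact EZ. }
assert (A2 : Rabs (dphi 2 t x c2 Z - dphi 2 t x y z) < eps/3).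
{ apply Hd2'; try (eapply Rlt_le_trans; [|exact L2]). apply Z0. apply Z0.
  eapply Rle_lt_trans. apply between_abs; exact Hc2. exact EY. exact EZ. }
assert (A3 : Rabs (dphi 3 t x y c3 - dphi 3 t x y z) < eps/3).
{ apply Hd3'; try (eapply Rlt_le_trans; [|exact L3]). apply Z0. apply Z0. apply Z0.
  eapply Rle_lt_trans. apply between_abs; exact Hc3. exact EZ. }
replace (w1 * dphi 1 t c1 Y Z + w2 * dphi 2 t x c2 Z + w3 * dphi 3 t x y c3 -
   (w1 * dphi 1 t x y z + w2 * dphi 2 t x y z + w3 * dphi 3 t x y z))
 with (w1 * (dphi 1 t c1 Y Z - dphi 1 t x y z) + w2 * (dphi 2 t x c2 Z - dphi 2 t x y z) + w3 * (dphi 3 t x y c3 - dphi 3 t x y z)) by ring.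
assert (K : forall w a, Rabs w <= 1 -> Rabs a < eps/3 -> Rabs (w * a) < eps/3).
{ intros w a Hw Ha. rewrite Rmult_comm. eapply Rle_lt_trans. apply abs_hw. exact Hw. exact Ha. }
eapply Rle_lt_trans. apply Rabs_triang.
eapply Rle_lt_trans. apply Rplus_le_compat_r. apply Rabs_triang.
assert (K1 := K w1 _ Hw1 A1). assert (K2 := K w2 _ Hw2 A2). assert (K3 := K w3 _ Hw3 A3). lra.
Qed.

End PhiFacts.


Lemma cmul {T : UniformSpace} (f g : T -> R) (x:T) : continuous f x -> continuous g x -> continuous (fun y => f y * g y) x.
Proof. intros. exact (continuous_mult f g x H H0). Qed.
Lemma cplus {T : UniformSpace} (f g : T -> R) (x:T) : continuous f x -> continuous g x -> continuous (fun y => f y + g y) x.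
Proof. intros. exact (continuous_plus f g x H H0). Qed.
Lemma copp {T : UniformSpace} (f : T -> R) (x:T) : continuous f x -> continuous (fun y => - f y) x.
Proof. intros. exact (continuous_opp f x H). Qed.
Lemma cminus {T : UniformSpace} (f g : T -> R) (x:T) : continuous f x -> continuous g x -> continuous (fun y => f y - g y) x.
Proof. intros. apply cplus; auto. apply copp; auto. Qed.
Lemma cconst {T : UniformSpace} (c:R) (x:T) : continuous (fun _ => c) x.
Proof. apply continuous_const. Qed.
Lemma cid (x:R) : continuous (fun y => y) x.
Proof. apply continuous_id. Qed.
Lemma cpow2 {T : UniformSpace} (f : T -> R) (x:T) : continuous f x -> continuous (fun y => f y ^ 2) x.
Proof. intros. apply (continuous_ext (fun y => f y * (f y * 1))). intros; simpl; ring. apply cmul; auto. apply cmul; auto. apply cconst. Qed.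
Lemma ccomp {T : UniformSpace} (f : R -> R) (g : T -> R) x : continuous g x -> continuous f (g x) -> continuous (fun y => f (g y)) x.
Proof. intros. exact (continuous_comp g f x H H0). Qed.

Ltac ct1 := match goal with
 | H : continuous ?g ?x |- continuous ?g ?x => exact H
 | H : continuous ?g ?x |- continuous (fun y => ?g y) ?x => exact H
 | |- continuous (fun y => @?a y + @?b y) _ => apply (cplus a b)
 | |- continuous (fun y => @?a y - @?b y) _ => apply (cminus a b)
 | |- continuous (fun y => @?a y * @?b y) _ => apply (cmul a b)
 | |- continuous (fun y => - @?a y) _ => apply (copp a)
 | |- continuous (fun y => @?a y ^ 2) _ => apply (cpow2 a)
 | |- continuous (fun y => y) _ => apply cid
 | |- continuous (fun y => ?c) _ => apply cconst
 end.
Ltac ct := repeat ct1.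

Lemma cont_lin (g : fun4) t r w1 w2 w3 : cont4_at g t (r*w1) (r*w2) (r*w3) -> Rabs w1 <= 1 -> Rabs w2 <= 1 -> Rabs w3 <= 1 ->
  continuous (fun s => g t (s*w1) (s*w2) (s*w3)) r.
Proof.
intros H H1 H2 H3. apply cont_of_eps. intros eps Heps. destruct (H eps Heps) as [d [Hd Hd']].
exists d. split. exact Hd. intros x' Hx. apply Hd'.
rewrite Rminus_diag, Rabs_R0; exact Hd.
all: rewrite <- Rmult_minus_distr_r; eapply Rle_lt_trans; [apply abs_hw; assumption|exact Hx].
Qed.

Lemma cont_of_dpl f x l : derivable_pt_lim f x l -> continuous f x.
Proof. intros H. apply (ex_derive_continuous (K:=R_AbsRing) (V:=R_NormedModule)). exists l. apply is_derive_Reals. exact H. Qed.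

Lemma dpl_eq f x l l' : derivable_pt_lim f x l -> l = l' -> derivable_pt_lim f x l'.
Proof. intros H E; subst; exact H. Qed.

Lemma f_mono (f f1 : R -> R) : (forall v, derivable_pt_lim f v (f1 v)) -> (forall v, 0 <= v -> 0 <= f1 v) ->
  forall x y, 0 <= x <= y -> f x <= f y.
Proof.
intros Hd Hp x y Hxy. destruct (mvt_gen f f1 x y) as [c [Hc E]].
{ intros c _. apply Hd. }
rewrite Rmin_left in Hc by lra. assert (0 <= f1 c) by (apply Hp; lra).
assert (0 <= f1 c * (y - x)) by (apply Rmult_le_pos; lra). lra.
Qed.

Lemma f_tpm (f f1 : R -> R) t r : (forall v, derivable_pt_lim f v (f1 v)) -> (forall v, 0 <= v -> 0 <= f1 v) ->
  (forall v, f (- v) = f v) -> 0 <= t -> 0 <= r -> f (t - r) <= f (t + r).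
Proof.
intros Hd Hp He Ht Hr. destruct (Rle_or_lt r t).
- apply (f_mono f f1); auto; lra.
- replace (t - r) with (- (r - t)) by ring. rewrite He. apply (f_mono f f1); auto; lra.
Qed.

Lemma key_ineq a b c c' u up Lr Lbr C0 : 0 < C0 -> 0 < c -> c <= c' -> a^2 <= C0 * b * c ->
  up = (Lr - Lbr)/2 ->
  2 * a * u * up <= /2 * (b * u^2) + C0 * (c' * Lr^2 + c * Lbr^2).
Proof.
intros HC Hc Hcc Ha Hup.
assert (Hb : 0 <= b).
{ destruct (Rle_or_lt 0 b); auto. exfalso. assert (C0 * b * c < 0).
  { assert (C0 * c > 0) by (apply Rmult_lt_0_compat; lra). nra. } nra. }
assert (S1 : 2 * C0 * c * up^2 <= C0 * (c' * Lr^2 + c * Lbr^2)).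
{ subst up. assert (0 <= (c' - c) * Lr^2) by (apply Rmult_le_pos; [lra|apply pow2_ge_0]). 
  assert (0 <= c * (Lr + Lbr)^2) by (apply Rmult_le_pos; [lra|apply pow2_ge_0]).
  assert (K : 0 <= c' * Lr^2 + c * Lbr^2 - 2 * c * ((Lr - Lbr)/2)^2) by nra.
  assert (0 <= C0 * (c' * Lr^2 + c * Lbr^2 - 2 * c * ((Lr - Lbr)/2)^2)) by (apply Rmult_le_pos; lra).
  nra. }
assert (S2 : 2 * a * u * up <= /2 * (b * u^2) + 2 * C0 * c * up^2).
{ destruct (Rle_lt_or_eq_dec 0 b Hb) as [Hb'|Hb'].
  - apply Rmult_le_reg_l with b. exact Hb'.
    assert (0 <= (b*u - 2*a*up)^2) by apply pow2_ge_0.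
    assert (b * (2 * C0 * c * up^2) >= 2 * a^2 * up^2) by nra.
    nra.
  - subst b. assert (a = 0) by nra. subst a. assert (0 <= C0 * c * up^2) by (apply Rmult_le_pos; [nra|apply pow2_ge_0]). nra. }
lra.
Qed.


Section OneD.
Variables (U : R -> R -> R -> R -> Prop) (phi : fun4) (dphi : nat -> fun4) (f f1 f2 : R -> R) (C0 t Rr w1 w2 w3 : R).
Hypothesis HU : open4 U.
Hypothesis Hsm : smooth_on U phi.
Hypothesis Hd : forall i s x y z, (i < 4)%nat -> U s x y z ->
       derivable_pt_lim (along phi i s x y z) (coord i s x y z) (dphi i s x y z).
Hypothesis Hfpos : forall v, 0 < f v.
Hypothesis Heven : forall v, f (- v) = f v.
Hypothesis Hf1 : forall v, derivable_pt_lim f v (f1 v).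
Hypothesis Hf2 : forall v, derivable_pt_lim f1 v (f2 v).
Hypothesis Hc2 : continuity f2.
Hypothesis Hmono : forall v, 0 <= v -> 0 <= f1 v.
Hypothesis HC : forall v, (f1 v) ^ 2 <= C0 * f2 v * f v.
Hypothesis HC0 : 0 < C0.
Hypothesis Ht : 0 <= t.
Hypothesis HR : 0 < Rr.
Hypothesis Hball : forall x y z, x ^ 2 + y ^ 2 + z ^ 2 <= Rr ^ 2 -> U t x y z.
Hypothesis Hw : w1^2 + w2^2 + w3^2 <= 1.

Lemma wb (w : R) : w^2 <= 1 -> Rabs w <= 1.
Proof. intros H. sabs; nra. Qed.
Let Hw1 : Rabs w1 <= 1. Proof. apply wb. assert (0 <= w2^2) by apply pow2_ge_0. assert (0 <= w3^2) by apply pow2_ge_0. lra. Qed.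
Let Hw2 : Rabs w2 <= 1. Proof. apply wb. assert (0 <= w1^2) by apply pow2_ge_0. assert (0 <= w3^2) by apply pow2_ge_0. lra. Qed.
Let Hw3 : Rabs w3 <= 1. Proof. apply wb. assert (0 <= w2^2) by apply pow2_ge_0. assert (0 <= w1^2) by apply pow2_ge_0. lra. Qed.

Let inU r : 0 <= r <= Rr -> U t (r*w1) (r*w2) (r*w3).
Proof. intros Hr. apply Hball. replace ((r * w1) ^ 2 + (r * w2) ^ 2 + (r * w3) ^ 2) with (r^2 * (w1^2 + w2^2 + w3^2)) by ring.
  assert (0 <= r^2) by apply pow2_ge_0. assert (r^2 <= Rr^2) by (apply pow_incr; lra).
  assert (r^2 * (w1^2 + w2^2 + w3^2) <= r^2 * 1) by (apply Rmult_le_compat_l; lra). lra. Qed.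

Let Ph s := phi t (s*w1) (s*w2) (s*w3).
Let Dd s := w1 * dphi 1 t (s*w1) (s*w2) (s*w3) + w2 * dphi 2 t (s*w1) (s*w2) (s*w3) + w3 * dphi 3 t (s*w1) (s*w2) (s*w3).
Let D0 s := dphi 0 t (s*w1) (s*w2) (s*w3).
Let u s := s * Ph s.
Let up s := Ph s + s * Dd s.
Let X s := f (t + s) * (Lrphi phi dphi t s w1 w2 w3)^2 + f (t - s) * (Lbrphi phi dphi t s w1 w2 w3)^2.
Let g0 s := f2 (t - s) * (u s)^2.
Let g1 s := 2 * f1 (t - s) * u s * up s.
Let F s := - (f1 (t - s) * (u s * u s)).

Let Lr_eq s : Lrphi phi dphi t s w1 w2 w3 = up s + s * D0 s.
Proof. unfold Lrphi, up, Dd, D0, Ph. cbv zeta. ring. Qed.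
Let Lbr_eq s : Lbrphi phi dphi t s w1 w2 w3 = - up s + s * D0 s.
Proof. unfold Lbrphi, up, Dd, D0, Ph. cbv zeta. ring. Qed.

Let cPh r : 0 <= r <= Rr -> continuous Ph r.
Proof. intros Hr. apply cont_lin; auto. apply (phi_cont U phi HU Hsm). apply inU; auto. Qed.
Let cDi i r : (i < 4)%nat -> 0 <= r <= Rr -> continuous (fun s => dphi i t (s*w1) (s*w2) (s*w3)) r.
Proof. intros Hi Hr. apply cont_lin; auto. apply (dphi_cont U phi dphi HU Hsm Hd); auto. Qed.
Let cDd r : 0 <= r <= Rr -> continuous Dd r.
Proof. intros Hr. unfold Dd. assert (A1 := cDi 1 r ltac:(lia) Hr). assert (A2 := cDi 2 r ltac:(lia) Hr). assert (A3 := cDi 3 r ltac:(lia) Hr). ct. Qed.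
Let cD0 r : 0 <= r <= Rr -> continuous D0 r.
Proof. intros Hr. exact (cDi 0 r ltac:(lia) Hr). Qed.
Let cfp r : continuous (fun s => f (t + s)) r.
Proof. apply (ccomp f (fun s => t + s)). ct. apply (cont_of_dpl _ _ _ (Hf1 _)). Qed.
Let cfm r : continuous (fun s => f (t - s)) r.
Proof. apply (ccomp f (fun s => t - s)). ct. apply (cont_of_dpl _ _ _ (Hf1 _)). Qed.
Let cf1m r : continuous (fun s => f1 (t - s)) r.
Proof. apply (ccomp f1 (fun s => t - s)). ct. apply (cont_of_dpl _ _ _ (Hf2 _)). Qed.
Let cf2m r : continuous (fun s => f2 (t - s)) r.
Proof. apply (ccomp f2 (fun s => t - s)). ct. apply continuity_pt_filterlim. apply Hc2. Qed.

Let cu r : 0 <= r <= Rr -> continuous u r.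
Proof. intros Hr. assert (A := cPh r Hr). unfold u. ct. Qed.
Let cup r : 0 <= r <= Rr -> continuous up r.
Proof. intros Hr. assert (A := cPh r Hr). assert (B := cDd r Hr). unfold up. apply cplus. exact A. apply cmul. apply cid. exact B. Qed.
Let cg0 r : 0 <= r <= Rr -> continuous g0 r.
Proof. intros Hr. assert (A := cu r Hr). assert (B := cf2m r). unfold g0. ct. Qed.
Let cg1 r : 0 <= r <= Rr -> continuous g1 r.
Proof. intros Hr. assert (A := cu r Hr). assert (A' := cup r Hr). assert (B := cf1m r). unfold g1. ct. Qed.
Let cX r : 0 <= r <= Rr -> continuous X r.
Proof. intros Hr. assert (A' := cup r Hr). assert (B := cD0 r Hr). assert (C1 := cfp r). assert (C2 := cfm r).
  apply (continuous_ext (fun s => f (t + s) * (up s + s * D0 s)^2 + f (t - s) * (- up s + s * D0 s)^2)).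
  intros s. unfold X. rewrite Lr_eq, Lbr_eq. reflexivity. ct. Qed.

Let dPh r : 0 <= r <= Rr -> derivable_pt_lim Ph r (Dd r).
Proof. intros Hr. exact (chain_dir U phi dphi HU Hsm Hd t r w1 w2 w3 (inU r Hr) Hw1 Hw2 Hw3). Qed.
Let du r : 0 <= r <= Rr -> derivable_pt_lim u r (up r).
Proof. intros Hr. eapply dpl_eq. apply (derivable_pt_lim_mult id Ph r 1 (Dd r)). apply derivable_pt_lim_id. apply dPh; auto.
  unfold up, id. ring. Qed.
Let dA r : derivable_pt_lim (fun s => f1 (t - s)) r (- f2 (t - r)).
Proof. eapply dpl_eq. apply (derivable_pt_lim_comp (fun s => t - s) f1 r (-1) (f2 (t - r))).
  eapply dpl_eq. apply (derivable_pt_lim_minus (fun _ => t) id r 0 1). apply derivable_pt_lim_const. apply derivable_pt_lim_id. ring.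
  apply Hf2. ring. Qed.
Let dF r : 0 <= r <= Rr -> derivable_pt_lim F r (g0 r - g1 r).
Proof. intros Hr. eapply dpl_eq. apply (derivable_pt_lim_opp (fun s => f1 (t - s) * (u s * u s))).
  apply (derivable_pt_lim_mult (fun s => f1 (t - s)) (fun s => u s * u s)). apply dA.
  apply (derivable_pt_lim_mult u u). apply du; auto. apply du; auto.
  unfold g0, g1. simpl. ring. Qed.

Let exc (g : R -> R) : (forall r, 0 <= r <= Rr -> continuous g r) -> ex_RInt g 0 Rr.
Proof. intros H. apply (ex_RInt_continuous (V:=R_CompleteNormedModule)). intros z Hz.
  rewrite Rmin_left in Hz by lra. rewrite Rmax_right in Hz by lra. apply H; auto. Qed.

Let IBP : RInt g0 0 Rr - RInt g1 0 Rr = - f1 (t - Rr) * (u Rr)^2.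
Proof.
assert (E0 := exc g0 cg0). assert (E1 := exc g1 cg1).
assert (H := RInt_minus g0 g1 0 Rr E0 E1). change (minus (RInt g0 0 Rr) (RInt g1 0 Rr)) with (RInt g0 0 Rr - RInt g1 0 Rr) in H.
rewrite <- H.
assert (K : is_RInt (fun s => g0 s - g1 s) 0 Rr (minus (F Rr) (F 0))).
{ apply (is_RInt_derive (V:=R_CompleteNormedModule) F (fun s => g0 s - g1 s)).
  - intros x Hx. rewrite Rmin_left in Hx by lra. rewrite Rmax_right in Hx by lra. apply is_derive_Reals. apply dF; auto.
  - intros x Hx. rewrite Rmin_left in Hx by lra. rewrite Rmax_right in Hx by lra. assert (A := cg0 x Hx). assert (B := cg1 x Hx). ct. }
apply (is_RInt_unique (V:=R_CompleteNormedModule)) in K. change (RInt (fun x : R => minus (g0 x) (g1 x)) 0 Rr) with (RInt (fun s => g0 s - g1 s) 0 Rr).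
rewrite K. change (minus (F Rr) (F 0)) with (F Rr - F 0). unfold F, u. simpl. ring.
Qed.

Lemma RInt_lin2 (g h : R -> R) a b k1 k2 : ex_RInt g a b -> ex_RInt h a b ->
  RInt (fun s => k1 * g s + k2 * h s) a b = k1 * RInt g a b + k2 * RInt h a b.
Proof.
intros Eg Eh.
assert (A := RInt_plus (V:=R_CompleteNormedModule) (fun s => scal k1 (g s)) (fun s => scal k2 (h s)) a b (ex_RInt_scal (V:=R_CompleteNormedModule) _ _ _ k1 Eg) (ex_RInt_scal (V:=R_CompleteNormedModule) _ _ _ k2 Eh)).
assert (B1 := RInt_scal (V:=R_CompleteNormedModule) g a b k1 Eg). assert (B2 := RInt_scal (V:=R_CompleteNormedModule) h a b k2 Eh).
exact (eq_trans A (f_equal2 plus B1 B2)).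
Qed.

Lemma main1D : Rint (fun r => f2 (t - r) * (phi t (r*w1) (r*w2) (r*w3))^2 * r^2) 0 Rr <=
  (2*C0+2) * (Rint (fun r => (f (t + r) * (Lrphi phi dphi t r w1 w2 w3)^2 + f (t - r) * (Lbrphi phi dphi t r w1 w2 w3)^2) / r^2 * r^2) 0 Rr
              + Rabs (f1 (t - Rr)) * ((phi t (Rr*w1) (Rr*w2) (Rr*w3))^2 * Rr^2)).
Proof.
assert (E0 := exc g0 cg0). assert (E1 := exc g1 cg1). assert (EX := exc X cX).
assert (R0 : Rint (fun r => f2 (t - r) * (phi t (r*w1) (r*w2) (r*w3))^2 * r^2) 0 Rr = RInt g0 0 Rr).
{ assert (Q : forall x, Rmin 0 Rr < x < Rmax 0 Rr -> g0 x = f2 (t - x) * (phi t (x*w1) (x*w2) (x*w3))^2 * x^2).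
  { intros x _. unfold g0, u, Ph. ring. }
  rewrite Rint_RInt. symmetry. apply RInt_ext. exact Q. eapply ex_RInt_ext. exact Q. exact E0. }
assert (QX : forall x, Rmin 0 Rr < x < Rmax 0 Rr -> X x = (f (t + x) * (Lrphi phi dphi t x w1 w2 w3)^2 + f (t - x) * (Lbrphi phi dphi t x w1 w2 w3)^2) / x^2 * x^2).
{ intros x Hx. rewrite Rmin_left, Rmax_right in Hx by lra. unfold X. field. lra. }
assert (R1 : Rint (fun r => (f (t + r) * (Lrphi phi dphi t r w1 w2 w3)^2 + f (t - r) * (Lbrphi phi dphi t r w1 w2 w3)^2) / r^2 * r^2) 0 Rr = RInt X 0 Rr).
{ rewrite Rint_RInt. symmetry. apply RInt_ext. exact QX. eapply ex_RInt_ext. exact QX. exact EX. }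
rewrite R0, R1.
assert (Hle : RInt g1 0 Rr <= /2 * RInt g0 0 Rr + C0 * RInt X 0 Rr).
{ rewrite <- RInt_lin2 by assumption. apply RInt_le. lra. exact E1.
  apply (ex_RInt_plus (V:=R_NormedModule) (fun s => scal (/2) (g0 s)) (fun s => scal C0 (X s))); apply (ex_RInt_scal (V:=R_NormedModule)); assumption.
  intros s Hs. unfold g1, g0, X. rewrite Lr_eq, Lbr_eq.
  apply key_ineq; auto. apply f_tpm with (f1 := f1); auto; lra. field. }
assert (HX : 0 <= RInt X 0 Rr).
{ apply RInt_ge_0. lra. exact EX. intros s Hs. unfold X.
  assert (0 <= f (t + s)) by (left; apply Hfpos). assert (0 <= f (t - s)) by (left; apply Hfpos).
  assert (0 <= (Lrphi phi dphi t s w1 w2 w3)^2) by apply pow2_ge_0. assert (0 <= (Lbrphi phi dphi t s w1 w2 w3)^2) by apply pow2_ge_0.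
  nra. }
assert (HI := IBP).
assert (Hu2 : (u Rr)^2 = (phi t (Rr*w1) (Rr*w2) (Rr*w3))^2 * Rr^2) by (unfold u, Ph; ring).
rewrite Hu2 in HI.
set (P := (phi t (Rr*w1) (Rr*w2) (Rr*w3))^2 * Rr^2) in *.
assert (HP : 0 <= P) by (unfold P; apply Rmult_le_pos; apply pow2_ge_0).
assert (Ha : - f1 (t - Rr) <= Rabs (f1 (t - Rr))) by (rewrite <- Rabs_Ropp; apply Rle_abs).
assert (Hab : 0 <= Rabs (f1 (t - Rr)) * P) by (apply Rmult_le_pos; [apply Rabs_pos|exact HP]).
assert (- f1 (t - Rr) * P <= Rabs (f1 (t - Rr)) * P) by (apply Rmult_le_compat_r; auto).
nra.
Qed.

End OneD.


Lemma comp4 {T : UniformSpace} (g : fun4) (A B C D : T -> R) q : continuous A q -> continuous B q -> continuous C q -> continuous D q ->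
  cont4_at g (A q) (B q) (C q) (D q) -> continuous (fun z => g (A z) (B z) (C z) (D z)) q.
Proof.
intros HA HB HC HD Hg. apply filterlim_locally. intros eps.
destruct (Hg eps (cond_pos eps)) as [d [Hd Hd']].
pose (dp := mkposreal d Hd).
apply filterlim_locally with (eps:=dp) in HA. apply filterlim_locally with (eps:=dp) in HB.
apply filterlim_locally with (eps:=dp) in HC. apply filterlim_locally with (eps:=dp) in HD.
generalize (filter_and _ _ HA (filter_and _ _ HB (filter_and _ _ HC HD))). apply filter_imp.
intros z [H1 [H2 [H3 H4]]]. apply Hd'; [exact H1|exact H2|exact H3|exact H4].
Qed.

Lemma cp1 (r th ph : R) : continuous (fun z : R*R*R => fst (fst z)) ((r,th),ph).
Proof. apply (continuous_comp fst fst). apply continuous_fst. apply continuous_fst. Qed.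
Lemma cp2 (r th ph : R) : continuous (fun z : R*R*R => snd (fst z)) ((r,th),ph).
Proof. apply (continuous_comp fst snd). apply continuous_fst. apply continuous_snd. Qed.
Lemma cp3 (r th ph : R) : continuous (fun z : R*R*R => snd z) ((r,th),ph).
Proof. apply continuous_snd. Qed.

Ltac ct2 := repeat (first [ct1 | match goal with
 | |- continuous (fun y => fst (fst y)) ((_,_),_) => apply cp1
 | |- continuous (fun y => snd (fst y)) ((_,_),_) => apply cp2
 | |- continuous (fun y => snd y) ((_,_),_) => apply cp3
 | |- continuous (fun y => fst y) (_,_) => apply continuous_fst
 | |- continuous (fun y => snd y) (_,_) => apply continuous_snd
 | |- continuous (fun y => sin (@?a y)) _ => apply (ccomp sin a); [|apply cont_sin]
 | |- continuous (fun y => cos (@?a y)) _ => apply (ccomp cos a); [|apply cont_cos]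
 | |- continuous (fun y => ?g (@?A y) (@?B y) (@?C y) (@?D y)) ?q => apply (comp4 g A B C D q)
 | |- continuous (fun y => ?F (@?a y)) _ => apply (ccomp F a)
 end]).

Lemma w_unit th ph : (sin th * cos ph)^2 + (sin th * sin ph)^2 + (cos th)^2 = 1.
Proof.
assert (A := sin2_cos2 th). assert (B := sin2_cos2 ph). unfold Rsqr in *.
replace ((sin th * cos ph)^2 + (sin th * sin ph)^2 + (cos th)^2) with
  ((sin th * sin th) * (sin ph * sin ph + cos ph * cos ph) + cos th * cos th) by ring.
rewrite B. lra.
Qed.

Lemma jc2_ext (g g' : R -> R -> R) p q : (forall p q, g p q = g' p q) -> jc2 g p q -> jc2 g' p q.
Proof. intros E H eps Heps. destruct (H eps Heps) as [d [Hd Hd']]. exists d. split; auto. intros. rewrite <- !E. auto. Qed.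

Lemma eps_of_cont2 (g : R -> R -> R) p q :
  continuous (fun z : R*R => g (fst z) (snd z)) (p,q) -> jc2 g p q.
Proof.
intros H eps Heps. apply filterlim_locally with (eps := mkposreal eps Heps) in H.
destruct H as [d Hd]. exists d. split. apply cond_pos. intros p' q' H1 H2.
apply (Hd (p',q')). split. exact H1. exact H2.
Qed.

Lemma sph_lemma (F : R -> R -> R -> R) :
  (forall th ph, jc2 (fun th ph => F (sin th * cos ph) (sin th * sin ph) (cos th)) th ph) ->
  (forall ph, ex_RInt (fun th => F (sin th * cos ph) (sin th * sin ph) (cos th) * sin th) 0 PI) /\
  ex_RInt (fun ph => RInt (fun th => F (sin th * cos ph) (sin th * sin ph) (cos th) * sin th) 0 PI) 0 (2*PI) /\
  sph_int F = RInt (fun ph => RInt (fun th => F (sin th * cos ph) (sin th * sin ph) (cos th) * sin th) 0 PI) 0 (2*PI).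
Proof.
intros HF.
set (G := fun th ph => F (sin th * cos ph) (sin th * sin ph) (cos th)).
set (h := fun th ph (q : R) => G th ph * sin th).
assert (Hh : forall x p q, 0 <= x <= PI -> jc3 h x p q).
{ intros x p q _. refine (eps_of_cont3 h x p q _). unfold h.
  apply (cmul (fun z : R*R*R => G (fst (fst z)) (snd (fst z))) (fun z => sin (fst (fst z)))).
  - apply (continuous_comp (fun z : R*R*R => fst z) (fun z : R*R => G (fst z) (snd z))). apply continuous_fst.
    apply cont_of_eps2. apply HF.
  - ct2. }
assert (PI0 : 0 <= PI) by (left; apply PI_RGT_0).
assert (E1 : forall ph, ex_RInt (fun th => F (sin th * cos ph) (sin th * sin ph) (cos th) * sin th) 0 PI).
{ intros ph. exact (jc3_ex_RInt h 0 PI ph 0 PI0 (fun x Hx => Hh x ph 0 Hx)). }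
assert (Hj : forall ph q, jc2 (fun ph q => RInt (fun x => h x ph q) 0 PI) ph q).
{ intros. apply param_int. exact PI0. intros; apply Hh; auto. }
assert (E2 : ex_RInt (fun ph => RInt (fun th => F (sin th * cos ph) (sin th * sin ph) (cos th) * sin th) 0 PI) 0 (2*PI)).
{ apply (jc3_ex_RInt (fun ph _ _ => RInt (fun x => h x ph 0) 0 PI) 0 (2*PI) 0 0). lra.
  intros x _ eps Heps. destruct (Hj x 0 eps Heps) as [d [Hd Hd']]. exists d. split; auto.
  intros. apply Hd'; auto. rewrite Rminus_diag, Rabs_R0; auto. }
split. exact E1. split. exact E2.
unfold sph_int. rewrite Rint_RInt.
- apply RInt_ext. intros x _. apply Rint_RInt. apply E1.
- eapply ex_RInt_ext. 2: exact E2. intros x _. symmetry. apply Rint_RInt. apply E1.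
Qed.


Section Asm.
Variables (U : R -> R -> R -> R -> Prop) (phi : fun4) (dphi : nat -> fun4) (f f1 f2 : R -> R) (C0 t Rr : R).
Hypothesis HU : open4 U.
Hypothesis Hsm : smooth_on U phi.
Hypothesis Hd : forall i s x y z, (i < 4)%nat -> U s x y z ->
       derivable_pt_lim (along phi i s x y z) (coord i s x y z) (dphi i s x y z).
Hypothesis Hfpos : forall v, 0 < f v.
Hypothesis Heven : forall v, f (- v) = f v.
Hypothesis Hf1 : forall v, derivable_pt_lim f v (f1 v).
Hypothesis Hf2 : forall v, derivable_pt_lim f1 v (f2 v).
Hypothesis Hc2 : continuity f2.
Hypothesis Hmono : forall v, 0 <= v -> 0 <= f1 v.
Hypothesis HC : forall v, (f1 v) ^ 2 <= C0 * f2 v * f v.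
Hypothesis HC0 : 0 < C0.
Hypothesis Ht : 0 <= t.
Hypothesis HR : 0 < Rr.
Hypothesis Hball : forall x y z, x ^ 2 + y ^ 2 + z ^ 2 <= Rr ^ 2 -> U t x y z.

Let cf2 x : continuous f2 x.
Proof. apply continuity_pt_filterlim. apply Hc2. Qed.
Let cf x : continuous f x.
Proof. apply (cont_of_dpl _ _ _ (Hf1 _)). Qed.

Let inU' r th ph : 0 <= r <= Rr -> U t (r * (sin th * cos ph)) (r * (sin th * sin ph)) (r * cos th).
Proof. intros Hr. apply Hball.
  replace ((r * (sin th * cos ph)) ^ 2 + (r * (sin th * sin ph)) ^ 2 + (r * cos th) ^ 2) with (r^2 * ((sin th * cos ph)^2 + (sin th * sin ph)^2 + (cos th)^2)) by ring.
  rewrite w_unit, Rmult_1_r. apply pow_incr; lra. Qed.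

Let FL := fun w1 w2 w3 => Rint (fun r => f2 (t - r) * (phi t (r*w1) (r*w2) (r*w3))^2 * r^2) 0 Rr.
Let FR := fun w1 w2 w3 => Rint (fun r => (f (t + r) * (Lrphi phi dphi t r w1 w2 w3)^2 + f (t - r) * (Lbrphi phi dphi t r w1 w2 w3)^2) / r^2 * r^2) 0 Rr.
Let FB := fun w1 w2 w3 => (phi t (Rr*w1) (Rr*w2) (Rr*w3))^2 * Rr^2.

Let hL r th ph := f2 (t - r) * (phi t (r*(sin th * cos ph)) (r*(sin th * sin ph)) (r*cos th))^2 * r^2.
Let hR r th ph := f (t + r) * (Lrphi phi dphi t r (sin th * cos ph) (sin th * sin ph) (cos th))^2 + f (t - r) * (Lbrphi phi dphi t r (sin th * cos ph) (sin th * sin ph) (cos th))^2.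

Let jhL r th ph : 0 <= r <= Rr -> jc3 hL r th ph.
Proof. intros Hr. refine (eps_of_cont3 hL r th ph _). unfold hL. cbv beta. ct2.
  all: simpl; try apply cf2; try apply cf.
  apply (phi_cont U phi HU Hsm). apply inU'; auto. Qed.

Let jhR r th ph : 0 <= r <= Rr -> jc3 hR r th ph.
Proof. intros Hr. refine (eps_of_cont3 hR r th ph _). unfold hR, Lrphi, Lbrphi. cbv beta zeta. ct2.
  all: simpl; try apply cf2; try apply cf.
  all: first [apply (phi_cont U phi HU Hsm) | apply (dphi_cont U phi dphi HU Hsm Hd); [lia|]]; apply inU'; auto. Qed.

Let jFL th ph : jc2 (fun th ph => FL (sin th * cos ph) (sin th * sin ph) (cos th)) th ph.
Proof.
apply (jc2_ext (fun th ph => RInt (fun x => hL x th ph) 0 Rr)).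
- intros p q. unfold FL. symmetry. apply Rint_RInt. apply (jc3_ex_RInt hL 0 Rr p q). lra. intros; apply jhL; auto.
- apply param_int. lra. intros; apply jhL; auto.
Qed.

Let jFR th ph : jc2 (fun th ph => FR (sin th * cos ph) (sin th * sin ph) (cos th)) th ph.
Proof.
apply (jc2_ext (fun th ph => RInt (fun x => hR x th ph) 0 Rr)).
- intros p q. unfold FR.
  assert (E : ex_RInt (fun x => hR x p q) 0 Rr) by (apply (jc3_ex_RInt hR 0 Rr p q); [lra|intros; apply jhR; auto]).
  assert (QX : forall x, Rmin 0 Rr < x < Rmax 0 Rr -> hR x p q = (f (t + x) * (Lrphi phi dphi t x (sin p * cos q) (sin p * sin q) (cos p))^2 + f (t - x) * (Lbrphi phi dphi t x (sin p * cos q) (sin p * sin q) (cos p))^2) / x^2 * x^2).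
  { intros x Hx. rewrite Rmin_left, Rmax_right in Hx by lra. unfold hR. field. lra. }
  rewrite Rint_RInt. apply RInt_ext. exact QX. eapply ex_RInt_ext. exact QX. exact E.
- apply param_int. lra. intros; apply jhR; auto.
Qed.

Let jFB th ph : jc2 (fun th ph => FB (sin th * cos ph) (sin th * sin ph) (cos th)) th ph.
Proof.
apply eps_of_cont2. unfold FB. ct2. all: simpl.
apply (phi_cont U phi HU Hsm). apply inU'; lra.
Qed.

Lemma final : sph_int FL <= (2*C0+2) * (sph_int FR + Rabs (f1 (t - Rr)) * sph_int FB).
Proof.
destruct (sph_lemma FL jFL) as [EL1 [EL2 EL3]].
destruct (sph_lemma FR jFR) as [ER1 [ER2 ER3]].
destruct (sph_lemma FB jFB) as [EB1 [EB2 EB3]].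
rewrite EL3, ER3, EB3.
set (C := 2*C0+2). set (c := Rabs (f1 (t - Rr))).
assert (HCp : 0 <= C) by (unfold C; lra).
assert (Inner : forall ph,
  RInt (fun th => FL (sin th * cos ph) (sin th * sin ph) (cos th) * sin th) 0 PI <=
  C * RInt (fun th => FR (sin th * cos ph) (sin th * sin ph) (cos th) * sin th) 0 PI
  + (C * c) * RInt (fun th => FB (sin th * cos ph) (sin th * sin ph) (cos th) * sin th) 0 PI).
{ intros ph. rewrite <- RInt_lin2 by auto. apply RInt_le. left; apply PI_RGT_0. auto.
  apply (ex_RInt_plus (V:=R_NormedModule) (fun s => scal C _) (fun s => scal (C*c) _)); apply (ex_RInt_scal (V:=R_NormedModule)); auto.
  intros th Hth.
  assert (Hs : 0 <= sin th) by (apply sin_ge_0; lra).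
  assert (M := main1D U phi dphi f f1 f2 C0 t Rr (sin th * cos ph) (sin th * sin ph) (cos th) HU Hsm Hd Hfpos Heven Hf1 Hf2 Hc2 Hmono HC HC0 Ht HR Hball ltac:(rewrite w_unit; lra)).
  change (FL (sin th * cos ph) (sin th * sin ph) (cos th) <= C * (FR (sin th * cos ph) (sin th * sin ph) (cos th) + c * FB (sin th * cos ph) (sin th * sin ph) (cos th))) in M.
  assert (K := Rmult_le_compat_r _ _ _ Hs M). lra. }
rewrite Rmult_plus_distr_l, <- Rmult_assoc.
rewrite <- RInt_lin2 by auto. apply RInt_le. left; apply Rmult_lt_0_compat; [lra|apply PI_RGT_0]. auto.
apply (ex_RInt_plus (V:=R_NormedModule) (fun s => scal C _) (fun s => scal (C*c) _)); apply (ex_RInt_scal (V:=R_NormedModule)); auto.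
intros ph _. apply Inner.
Qed.

End Asm.

Theorem lemma2p9 :
  forall C0 : R, 0 < C0 ->
  exists C : R, 0 < C /\
  forall (f f1 f2 : R -> R) (t Rr : R) (phi : fun4) (dphi : nat -> fun4)
         (U : R -> R -> R -> R -> Prop),
    (* f > 0, even, C^2 with f' = f1, f'' = f2 *)
    (forall v, 0 < f v) ->
    (forall v, f (- v) = f v) ->
    (forall v, derivable_pt_lim f v (f1 v)) ->
    (forall v, derivable_pt_lim f1 v (f2 v)) ->
    continuity f2 ->
    (forall v, 0 <= v -> 0 <= f1 v) ->
    (forall v, (f1 v) ^ 2 <= C0 * f2 v * f v) ->
    0 <= t -> 0 < Rr ->
    (* phi smooth on an open neighbourhood U of {t} x {|x| <= Rr} *)
    open4 U ->
    (forall x y z, x ^ 2 + y ^ 2 + z ^ 2 <= Rr ^ 2 -> U t x y z) ->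
    smooth_on U phi ->
    (forall i s x y z, (i < 4)%nat -> U s x y z ->
       derivable_pt_lim (along phi i s x y z) (coord i s x y z) (dphi i s x y z)) ->
    ball_int Rr (fun r w1 w2 w3 => f2 (t - r) * (phi t (r * w1) (r * w2) (r * w3)) ^ 2)
    <= C * ( ball_int Rr (fun r w1 w2 w3 =>
                (f (t + r) * (Lrphi phi dphi t r w1 w2 w3) ^ 2
                 + f (t - r) * (Lbrphi phi dphi t r w1 w2 w3) ^ 2) / r ^ 2)
             + Rabs (f1 (t - Rr)) *
               sph_int (fun w1 w2 w3 =>
                 (phi t (Rr * w1) (Rr * w2) (Rr * w3)) ^ 2 * Rr ^ 2)).
Proof.
intros C0 HC0. exists (2*C0+2). split. lra.
intros f f1 f2 t Rr phi dphi U Hfpos Heven Hf1 Hf2 Hc2 Hmono HC Ht HR HU Hball Hsm Hd.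
exact (final U phi dphi f f1 f2 C0 t Rr HU Hsm Hd Hfpos Heven Hf1 Hf2 Hc2 Hmono HC HC0 Ht HR Hball).
Qed.
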